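(* $\bm M\succeq\bm 0$, $\bm M_K\succeq\bm 0$, $\bm H\succ\bm 0$ and $\bm H_K\succ\bm 0$.
   Context: Let $\bm X=(\bm X_1,\dots,\bm X_K)\in\mathbb R^{n\times p}$ with $\bm X_i\in\mathbb R^{n\times p_i}$, $\bm A=\bm X^\top\bm X=(\bm A_1,\dots,\bm A_K)$, $\bm A_i=\bm X^\top\bm X_i$, and $\mu>0$. Let $\bm S=\eta\bm I_p-\mu\bm A^\top\bm A$ with $\eta$ larger than the largest eigenvalue of $\mu\bm A^\top\bm A$, and $\bm S_i'=\eta_i\bm I_{p_i}-\mu\bm A_i^\top\bm A_i$ with $\eta_i$ larger than the largest eigenvalue of $\mu\bm A_i^\top\bm A_i$. Define $\bm M=\begin{pmatrix}\mu\bm A^\top\bm A&\bm 0&\bm A^\top\\\bm 0&\mu\bm I_p&-\bm I_p\\\bm A&-\bm I_p&\frac{2}{\mu}\bm I_p\end{pmatrix}$, $\bm H=\begin{pmatrix}\mu\bm A^\top\bm A+\bm S&\bm 0&\bm A^\top\\\bm 0&\mu\bm I_p&-\bm I_p\\\bm A&-\bm I_p&\frac{2}{\mu}\bm I_p\end{pmatrix}$, $\bm M_K=\begin{pmatrix}\bm\Lambda_K&\bm G^\top\\\bm G&\frac{K+1}{\mu}\bm I_p\end{pmatrix}$, $\bm H_K=\begin{pmatrix}\tilde{\bm\Lambda}_K&\bm G^\top\\\bm G&\frac{K+1}{\mu}\bm I_p\end{pmatrix}$, where $\bm G=(\bm A_1,\dots,\bm A_K,-\bm I_p)$, $\bm\Lambda_K=\mathrm{diag}(\mu\bm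 A_1^\top\bm A_1,\dots,\mu\bm A_K^\top\bm A_K,\mu\bm I_p)$, $\tilde{\bm\Lambda}_K=\mathrm{diag}(\mu\bm A_1^\top\bm A_1+\bm S_1',\dots,\mu\bm A_K^\top\bm A_K+\bm S_K',\mu\bm I_p)=\mathrm{diag}(\eta_1\bm I_{p_1},\dots,\eta_K\bm I_{p_K},\mu\bm I_p)$. $\succeq\bm 0$ means positive semidefinite, $\succ\bm 0$ positive definite. *)

(* Defs.v *)
From HB Require Import structures.
From mathcomp Require Import all_boot all_order all_algebra.
Set Implicit Arguments. Unset Strict Implicit. Unset Printing Implicit Defensive.
Import Order.TTheory GRing.Theory Num.Theory.
Local Open Scope ring_scope.

Section Defs.
Variable R : rcfType.

Definition psd m (A : 'M[R]_m) : Prop :=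
  A^T = A /\ forall x : 'cV[R]_m, 0 <= (x^T *m A *m x) ord0 ord0.
Definition pd m (A : 'M[R]_m) : Prop :=
  A^T = A /\ forall x : 'cV[R]_m, x != 0 -> 0 < (x^T *m A *m x) ord0 ord0.

Definition block3 p (B11 B12 B13 B21 B22 B23 B31 B32 B33 : 'M[R]_p)
  : 'M[R]_(p + p + p) :=
  block_mx (block_mx B11 B12 B21 B22) (col_mx B13 B23) (row_mx B31 B32) B33.

Variables (K n : nat) (pp : 'I_K -> nat).
Variable Xs : forall i : 'I_K, 'M[R]_(n, pp i).

Definition Xfull : 'M[R]_(n, \sum_i pp i) := \mxrow_(i < K) Xs i.
Definition Amat : 'M[R]_(\sum_i pp i) := Xfull^T *m Xfull.
Definition Ablk (i : 'I_K) : 'M[R]_(\sum_i pp i, pp i) := Xfull^T *m Xs i.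

Definition Smat (mu eta : R) : 'M[R]_(\sum_i pp i) :=
  eta%:M - mu *: (Amat^T *m Amat).
Definition Sblk (mu : R) (etas : 'I_K -> R) (i : 'I_K) : 'M[R]_(pp i) :=
  (etas i)%:M - mu *: ((Ablk i)^T *m Ablk i).

Definition Mmat (mu : R) :=
  block3 (mu *: (Amat^T *m Amat)) 0 Amat^T
         0 (mu%:M) (- 1%:M)
         Amat (- 1%:M) ((2 / mu)%:M).
Definition Hmat (mu eta : R) :=
  block3 (mu *: (Amat^T *m Amat) + Smat mu eta) 0 Amat^T
         0 (mu%:M) (- 1%:M)
         Amat (- 1%:M) ((2 / mu)%:M).

Definition Gmat : 'M[R]_(\sum_i pp i, \sum_i pp i + \sum_i pp i) :=
  row_mx (\mxrow_(i < K) Ablk i) (- 1%:M).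
Definition LambdaK (mu : R) : 'M[R]_(\sum_i pp i + \sum_i pp i) :=
  block_mx (\mxdiag_(i < K) (mu *: ((Ablk i)^T *m Ablk i))) 0 0 (mu%:M).
Definition LambdaKt (mu : R) (etas : 'I_K -> R) : 'M[R]_(\sum_i pp i + \sum_i pp i) :=
  block_mx (\mxdiag_(i < K) (mu *: ((Ablk i)^T *m Ablk i) + Sblk mu etas i)) 0 0 (mu%:M).
Definition MKmat (mu : R) :=
  block_mx (LambdaK mu) Gmat^T Gmat (((K.+1)%:R / mu)%:M).
Definition HKmat (mu : R) (etas : 'I_K -> R) :=
  block_mx (LambdaKt mu etas) Gmat^T Gmat (((K.+1)%:R / mu)%:M).
End Defs.

(* Main.v *)
Require Import Defs.
From HB Require Import structures.
From mathcomp Require Import all_boot all_order all_algebra.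
Import Order.TTheory GRing.Theory Num.Theory.
Local Open Scope ring_scope.
From mathcomp Require Import ring lra.
From mathcomp Require Import complex.
Set Implicit Arguments. Unset Strict Implicit. Unset Printing Implicit Defensive.

Local Open Scope sesquilinear_scope.

Lemma real_f (R : rcfType) (r : R) : real_complex R r \is Num.real.
Proof. by apply/complex_realP; exists r. Qed.

Lemma sym_pd (R : rcfType) m (S : 'M[R]_m) : S^T = S -> (forall r, eigenvalue S r -> 0 < r) ->
  forall x : 'cV[R]_m, x != 0 -> 0 < (x^T *m S *m x) 0 0.
Proof.
move=> Ssym Spos x x0.
pose SC := map_mx (real_complex R) S.
have SCreal : SC \is a mxOver Num.real.
  by apply/mxOverP => i j; rewrite mxE real_f.
have SCsym : SC \is symmetricmx.
  apply/is_hermitianmxP; rewrite expr0 scale1r.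
  apply/matrixP => i j; rewrite !mxE.
  by have := congr1 (fun M : 'M_m => M j i) Ssym; rewrite mxE => ->.
have SCherm := realsym_hermsym SCsym SCreal.
have SCnorm := hermitian_normalmx SCherm.
have decomp := orthomx_spectralP SCnorm.
move: decomp.
set P := spectralmx SC; set d := spectral_diag SC => decomp.
have Pu : P \in unitmx := spectral_unit SC.
have dreal : d \is a mxOver Num.real := hermitian_spectral_diag_real SCherm.
have dpos : forall j, exists2 r, d 0 j = (real_complex R) r & 0 < r.
  move=> j; have /complex_realP [r dr] : d 0 j \is Num.real by apply: (mxOverP dreal).
  exists r => //; apply: Spos.
  have : eigenvalue SC (d 0 j).
    apply/eigenvalueP; exists (row j P).
      have PSC : P *m SC = diag_mx d *m P.
        by rewrite {1}decomp !mulmxA mulmxV // mul1mx.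
      rewrite -row_mul PSC mul_diag_mx; apply/rowP => k; rewrite !mxE //.
    apply/eqP => rj0.
    have := mulmxK Pu (delta_mx 0 j : 'rV_m).
    rewrite -rowE rj0 mul0mx => /matrixP/(_ 0 j); rewrite !mxE !eqxx /=.
    by move/eqP; rewrite eq_sym oner_eq0.
  rewrite eigenvalue_root_char dr => H.
  by rewrite eigenvalue_root_char -(fmorph_root (real_complex R)) map_char_poly; exact: H.
pose X := map_mx (real_complex R) x.
have Xn0 : X != 0 by rewrite map_mx_eq0.
pose Y := P *m X.
have Yn0 : Y != 0.
  by apply: contraNneq Xn0 => Y0; rewrite -(mulKmx Pu X) -/Y Y0 mulmx0.
have XT : X^T = X ^t*.
  by apply/matrixP => i j; rewrite !mxE conj_Creal // real_f.
have key : (real_complex R) ((x^T *m S *m x) 0 0) = \sum_j (Y j 0)^* * d 0 j * Y j 0.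
  have E : ((x^T *m S *m x) ^ (real_complex R)) 0 0 = (real_complex R) ((x^T *m S *m x) 0 0) by rewrite mxE.
  rewrite -E.
  rewrite !map_mxM -map_trmx -/X -/SC decomp invmx_unitary ?spectral_unitarymx //.
  rewrite XT.
  have YT : Y ^t* = X ^t* *m P ^t* by rewrite trmx_mul map_mxM.
  rewrite !mulmxA -YT -!mulmxA -/Y mulmxA mxE.
  by apply: eq_bigr => j _; rewrite mul_mx_diag !mxE.
have [j0 Hj0] : exists j, Y j 0 != 0.
  case: (pickP (fun j => Y j 0 != 0)) => [j Hj|H]; first by exists j.
  case/eqP: Yn0; apply/matrixP => i k; rewrite ord1 [RHS]mxE.
  by move/negbFE/eqP: (H i).
have term_ge0 : forall j, 0 <= (Y j 0)^* * d 0 j * Y j 0.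
  move=> j; have [r -> rpos] := dpos j.
  rewrite mulrC mulrA; apply: mulr_ge0; last first.
    by rewrite -(rmorph0 (real_complex R)) lecR ltW.
  exact: mul_conjC_ge0.
have term_gt0 : 0 < (Y j0 0)^* * d 0 j0 * Y j0 0.
  have [r -> rpos] := dpos j0.
  rewrite mulrC mulrA; apply: mulr_gt0; last first.
    by rewrite -(rmorph0 (real_complex R)) ltcR.
  by rewrite mul_conjC_gt0.
rewrite -ltcR key rmorph0 (bigD1 j0) //=.
by apply: ltr_pwDl => //; apply: sumr_ge0 => j _; apply: term_ge0.
Qed.
Local Close Scope sesquilinear_scope.
Definition dot {R : rcfType} m (a b : 'cV[R]_m) : R := (a^T *m b) 0 0.

Lemma dotC {R : rcfType} m (a b : 'cV[R]_m) : dot a b = dot b a.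
Proof.
rewrite /dot; have -> : (a^T *m b) 0 0 = (a^T *m b)^T 0 0 by rewrite [RHS]mxE.
by rewrite trmx_mul trmxK.
Qed.
Lemma dotDl {R : rcfType} m (a b c : 'cV[R]_m) : dot (a + b) c = dot a c + dot b c.
Proof. by rewrite /dot raddfD mulmxDl mxE. Qed.
Lemma dotZl {R : rcfType} m k (a b : 'cV[R]_m) : dot (k *: a) b = k * dot a b.
Proof. by rewrite /dot linearZ /= -scalemxAl mxE. Qed.
Lemma dotNl {R : rcfType} m (a b : 'cV[R]_m) : dot (- a) b = - dot a b.
Proof. by rewrite /dot raddfN mulNmx mxE. Qed.
Lemma dotBl {R : rcfType} m (a b c : 'cV[R]_m) : dot (a - b) c = dot a c - dot b c.
Proof. by rewrite dotDl dotNl. Qed.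
Lemma dotDr {R : rcfType} m (a b c : 'cV[R]_m) : dot c (a + b) = dot c a + dot c b.
Proof. by rewrite dotC dotDl !(dotC c). Qed.
Lemma dotZr {R : rcfType} m k (a b : 'cV[R]_m) : dot b (k *: a) = k * dot b a.
Proof. by rewrite dotC dotZl dotC. Qed.
Lemma dotNr {R : rcfType} m (a b : 'cV[R]_m) : dot b (- a) = - dot b a.
Proof. by rewrite dotC dotNl dotC. Qed.
Lemma dotBr {R : rcfType} m (a b c : 'cV[R]_m) : dot c (a - b) = dot c a - dot c b.
Proof. by rewrite dotDr dotNr. Qed.
Lemma dot0l {R : rcfType} m (a : 'cV[R]_m) : dot 0 a = 0.
Proof. by rewrite /dot trmx0 mul0mx mxE. Qed.
Lemma dot0r {R : rcfType} m (a : 'cV[R]_m) : dot a 0 = 0.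
Proof. by rewrite dotC dot0l. Qed.
Lemma dot_suml {R : rcfType} m (I : finType) (a : I -> 'cV[R]_m) b :
  dot (\sum_i a i) b = \sum_i dot (a i) b.
Proof. by rewrite /dot raddf_sum mulmx_suml summxE. Qed.
Lemma dotMr {R : rcfType} m n (B : 'M[R]_(m, n)) a b : dot a (B *m b) = dot (B^T *m a) b.
Proof. by rewrite /dot trmx_mul trmxK mulmxA. Qed.
Lemma dot_scalar {R : rcfType} m k (a b : 'cV[R]_m) : dot a (k%:M *m b) = k * dot a b.
Proof. by rewrite mul_scalar_mx dotZr. Qed.
Lemma dot_ge0 {R : rcfType} m (a : 'cV[R]_m) : 0 <= dot a a.
Proof.
rewrite /dot mxE; apply: sumr_ge0 => j _; rewrite mxE -expr2; exact: sqr_ge0.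
Qed.
Lemma dot_eq0 {R : rcfType} m (a : 'cV[R]_m) : dot a a = 0 -> a = 0.
Proof.
rewrite /dot mxE => /psumr_eq0P H; apply/matrixP => i j; rewrite ord1 [RHS]mxE.
have Hn : forall k, true -> 0 <= a^T 0 k * a k 0.
  by move=> k _; rewrite mxE -expr2; exact: sqr_ge0.
have := H Hn i isT; rewrite mxE => /eqP; by rewrite mulf_eq0 orbb => /eqP.
Qed.
Lemma dot_gt0 {R : rcfType} m (a : 'cV[R]_m) : a != 0 -> 0 < dot a a.
Proof.
move=> an0; rewrite lt_def dot_ge0 andbT; apply: contraNneq an0 => /dot_eq0 ->//.
Qed.
Lemma dot_col {R : rcfType} m n (a1 b1 : 'cV[R]_m) (a2 b2 : 'cV[R]_n) :
  dot (col_mx a1 a2) (col_mx b1 b2) = dot a1 b1 + dot a2 b2.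
Proof. by rewrite /dot tr_col_mx mul_row_col mxE. Qed.
Lemma dot_block {R : rcfType} m n (x1 y1 : 'cV[R]_m) (x2 y2 : 'cV[R]_n) A B C D :
  dot (col_mx x1 x2) (block_mx A B C D *m col_mx y1 y2) =
  dot x1 (A *m y1) + dot x1 (B *m y2) + dot x2 (C *m y1) + dot x2 (D *m y2).
Proof. by rewrite mul_block_col dot_col !dotDr !addrA. Qed.
Lemma dot_mxcol {R : rcfType} (K : nat) (p_ : 'I_K -> nat) (a b : forall i, 'cV[R]_(p_ i)) :
  dot (\mxcol_i a i) (\mxcol_i b i) = \sum_i dot (a i) (b i).
Proof. by rewrite /dot tr_mxcol mul_mxrow_mxcol summxE. Qed.


Lemma Amat_sym (R : rcfType) K n (pp : 'I_K -> nat) (Xs : forall i : 'I_K, 'M[R]_(n, pp i)) :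
  (Amat Xs)^T = Amat Xs.
Proof. by rewrite /Amat trmx_mul trmxK. Qed.

Lemma M_form (R : rcfType) K n (pp : 'I_K -> nat) (Xs : forall i : 'I_K, 'M[R]_(n, pp i))
  (mu : R) (x y z : 'cV[R]_(\sum_i pp i)) : mu != 0 ->
  dot (col_mx (col_mx x y) z) (Mmat Xs mu *m col_mx (col_mx x y) z) =
  mu * dot (Amat Xs *m x + mu^-1 *: z) (Amat Xs *m x + mu^-1 *: z)
  + mu * dot (y - mu^-1 *: z) (y - mu^-1 *: z).
Proof.
move=> mu0; rewrite /Mmat /block3 dot_block dot_block !mul_col_mx !dot_col !mul_row_col !dotDr.
rewrite !mul0mx !dot0r !mul_scalar_mx !dotZr !mulNmx !mul1mx !dotNr -!scalemxAl !dotZr.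
rewrite -mulmxA (dotMr (Amat Xs)^T) (dotMr (Amat Xs)^T) trmxK.
rewrite (dotC z (Amat Xs *m x)) (dotC z y).
rewrite !(dotDl, dotBl, dotZl, dotNl) (dotC z (Amat Xs *m x)) (dotC z y).
by field.
Qed.

Lemma H_form (R : rcfType) K n (pp : 'I_K -> nat) (Xs : forall i : 'I_K, 'M[R]_(n, pp i))
  (mu eta : R) (x y z : 'cV[R]_(\sum_i pp i)) :
  dot (col_mx (col_mx x y) z) (Hmat Xs mu eta *m col_mx (col_mx x y) z) =
  dot (col_mx (col_mx x y) z) (Mmat Xs mu *m col_mx (col_mx x y) z)
  + dot x (Smat Xs mu eta *m x).
Proof.
have -> : Hmat Xs mu eta = Mmat Xs mu + block3 (Smat Xs mu eta) 0 0 0 0 0 0 0 0.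
  by rewrite /Hmat /Mmat /block3 !add_block_mx add_col_mx add_row_mx !addr0.
rewrite mulmxDl dotDr; congr (_ + _).
rewrite /block3 dot_block dot_block !mul_col_mx !dot_col !mul_row_col !dotDr.
by rewrite !mul0mx !dot0r !addr0.
Qed.

Lemma MK_form (R : rcfType) K n (pp : 'I_K -> nat) (Xs : forall i : 'I_K, 'M[R]_(n, pp i))
  (mu : R) (u w z : 'cV[R]_(\sum_i pp i)) : mu != 0 ->
  dot (col_mx (col_mx u w) z) (MKmat Xs mu *m col_mx (col_mx u w) z) =
  \sum_i mu * dot (Ablk Xs i *m submxcol u i + mu^-1 *: z)
                  (Ablk Xs i *m submxcol u i + mu^-1 *: z)
  + mu * dot (w - mu^-1 *: z) (w - mu^-1 *: z).
Proof.
move=> mu0.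
set a := fun i => Ablk Xs i *m submxcol u i.
have Gu : \mxrow_i Ablk Xs i *m u = \sum_i a i.
  by rewrite -{1}(submxcolK u) mul_mxrow_mxcol.
have Du : dot u (\mxdiag_i (mu *: ((Ablk Xs i)^T *m Ablk Xs i)) *m u)
          = \sum_i mu * dot (a i) (a i).
  have := dot_mxcol (fun i => submxcol u i)
     (fun i => (mu *: ((Ablk Xs i)^T *m Ablk Xs i)) *m submxcol u i).
  rewrite -mul_mxdiag_mxcol submxcolK => ->.
  by apply: eq_bigr => i _; rewrite -scalemxAl dotZr -mulmxA dotMr trmxK.
rewrite /MKmat /LambdaK dot_block dot_block Du.
rewrite (dotMr (Gmat Xs)^T) trmxK /Gmat !mul_row_col Gu.
rewrite !mul0mx !dot0r !mul_scalar_mx !dotZr !mulNmx !mul1mx.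
rewrite [in RHS](eq_bigr (fun i => mu * dot (a i) (a i) + 2 * dot (a i) z + mu^-1 * dot z z)); last first.
  move=> i _; rewrite !(dotDl, dotDr, dotZl, dotZr) (dotC z (a i)); by field.
rewrite !big_split /= -!mulr_sumr -dot_suml sumr_const card_ord -mulr_natr.
set s := \sum_i a i; set t := \sum_i dot (a i) (a i).
rewrite !(dotDl, dotDr, dotBl, dotBr, dotZl, dotZr, dotNl, dotNr) (dotC z s) (dotC z w).
by field.
Qed.

Lemma HK_form (R : rcfType) K n (pp : 'I_K -> nat) (Xs : forall i : 'I_K, 'M[R]_(n, pp i))
  (mu : R) (etas : 'I_K -> R) (u w z : 'cV[R]_(\sum_i pp i)) :
  dot (col_mx (col_mx u w) z) (HKmat Xs mu etas *m col_mx (col_mx u w) z) =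
  dot (col_mx (col_mx u w) z) (MKmat Xs mu *m col_mx (col_mx u w) z)
  + \sum_i dot (submxcol u i) (Sblk Xs mu etas i *m submxcol u i).
Proof.
have -> : HKmat Xs mu etas = MKmat Xs mu +
    block_mx (block_mx (\mxdiag_i Sblk Xs mu etas i) 0 0 0) 0 0 0.
  by rewrite /HKmat /MKmat /LambdaKt /LambdaK mxdiagD !add_block_mx !addr0.
rewrite mulmxDl dotDr; congr (_ + _).
rewrite dot_block dot_block !mul0mx !dot0r !addr0.
have := dot_mxcol (fun i => submxcol u i)
     (fun i => Sblk Xs mu etas i *m submxcol u i).
by rewrite -mul_mxdiag_mxcol submxcolK.
Qed.

Lemma qf_dot (R : rcfType) m (A : 'M[R]_m) (x : 'cV[R]_m) :
  (x^T *m A *m x) 0 0 = dot x (A *m x).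
Proof. by rewrite /dot mulmxA. Qed.

Lemma split3 (R : rcfType) p q r (v : 'cV[R]_(p + q + r)) :
  exists x y z, v = col_mx (col_mx x y) z.
Proof. by exists (usubmx (usubmx v)), (dsubmx (usubmx v)), (dsubmx v); rewrite !vsubmxK. Qed.

Lemma tr_block3 (R : rcfType) p (B11 B12 B13 B21 B22 B23 B31 B32 B33 : 'M[R]_p) :
  (block3 B11 B12 B13 B21 B22 B23 B31 B32 B33)^T =
  block3 B11^T B21^T B31^T B12^T B22^T B32^T B13^T B23^T B33^T.
Proof. by rewrite /block3 !tr_block_mx tr_col_mx tr_row_mx. Qed.

Lemma sym_AtA (R : rcfType) m k (mu : R) (B : 'M[R]_(m, k)) :
  (mu *: (B^T *m B))^T = mu *: (B^T *m B).
Proof. by rewrite linearZ /= trmx_mul trmxK. Qed.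

Lemma trN1 (R : rcfType) m : (- (1%:M : 'M[R]_m))^T = - 1%:M.
Proof. by rewrite linearN /= tr_scalar_mx. Qed.

Lemma shift_eig (R : rcfType) m (B : 'M[R]_m) (eta : R) :
  (forall a, eigenvalue B a -> a < eta) ->
  forall r, eigenvalue (eta%:M - B) r -> 0 < r.
Proof.
move=> hB r /eigenvalueP [v hv vn0].
have : eigenvalue B (eta - r).
  apply/eigenvalueP; exists v => //.
  move: hv; rewrite mulmxBr mul_mx_scalar scalerBl => hv.
  by rewrite -hv opprB addrC subrK.
move/hB; rewrite ltrBlDr -ltrBlDl subrr //.
Qed.

Lemma cV_idx (R : rcfType) m (z : 'cV[R]_m) : z != 0 -> exists j : 'I_m, true.
Proof.
case: m z => [|m] z; last by exists ord0.
by rewrite flatmx0 eqxx.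
Qed.

Theorem proposition1 (R : rcfType) (K n : nat) (pp : 'I_K -> nat)
  (Xs : forall i : 'I_K, 'M[R]_(n, pp i)) (mu eta : R) (etas : 'I_K -> R) :
  0 < mu ->
  (forall a : R, eigenvalue (mu *: ((Amat Xs)^T *m Amat Xs)) a -> a < eta) ->
  (forall (i : 'I_K) (a : R),
      eigenvalue (mu *: ((Ablk Xs i)^T *m Ablk Xs i)) a -> a < etas i) ->
  [/\ psd (Mmat Xs mu), psd (MKmat Xs mu), pd (Hmat Xs mu eta)
    & pd (HKmat Xs mu etas)].
Proof.
move=> mupos hA hAi.
have mu0 : mu != 0 by rewrite gt_eqF.
have muinv0 : mu^-1 != 0 by rewrite invr_eq0.
have Msym : (Mmat Xs mu)^T = Mmat Xs mu.
  rewrite /Mmat tr_block3 sym_AtA !trmx0 !tr_scalar_mx trN1 trmxK.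
  by rewrite Amat_sym.
have MKsym : (MKmat Xs mu)^T = MKmat Xs mu.
  rewrite /MKmat tr_block_mx trmxK /LambdaK tr_block_mx tr_mxdiag !trmx0 !tr_scalar_mx.
  have E : \mxdiag_i (mu *: ((Ablk Xs i)^T *m Ablk Xs i))^T
         = \mxdiag_i (mu *: ((Ablk Xs i)^T *m Ablk Xs i)).
    by apply: eq_mxdiag => i; exact: sym_AtA.
  by rewrite E.
have Ssym : (Smat Xs mu eta)^T = Smat Xs mu eta.
  by rewrite /Smat linearB /= tr_scalar_mx sym_AtA.
have Sisym : forall i, (Sblk Xs mu etas i)^T = Sblk Xs mu etas i.
  by move=> i; rewrite /Sblk linearB /= tr_scalar_mx sym_AtA.
have Spd : forall x, x != 0 -> 0 < dot x (Smat Xs mu eta *m x).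
  move=> x x0; rewrite -qf_dot; apply: sym_pd => //.
  exact: shift_eig.
have Sge0 : forall x, 0 <= dot x (Smat Xs mu eta *m x).
  move=> x; have [->|x0] := eqVneq x 0; first by rewrite dot0l.
  exact/ltW/Spd.
have Sipd : forall i x, x != 0 -> 0 < dot x (Sblk Xs mu etas i *m x).
  move=> i x x0; rewrite -qf_dot; apply: sym_pd => //.
  exact: (shift_eig (hAi i)).
have Sige0 : forall i x, 0 <= dot x (Sblk Xs mu etas i *m x).
  move=> i x; have [->|x0] := eqVneq x 0; first by rewrite dot0l.
  exact/ltW/Sipd.
have mdot_ge0 : forall m (a : 'cV[R]_m), 0 <= mu * dot a a.
  by move=> m a; apply: mulr_ge0; [exact: ltW | exact: dot_ge0].
have mdot_gt0 : forall m (a : 'cV[R]_m), a != 0 -> 0 < mu * dot a a.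
  by move=> m a a0; apply: mulr_gt0 => //; exact: dot_gt0.
split.
- split => // v; have [x [y [z ->]]] := split3 v.
  by rewrite qf_dot M_form //; apply: addr_ge0.
- split => // v; have [x [y [z ->]]] := split3 v.
  rewrite qf_dot MK_form //; apply: addr_ge0 => //.
  by apply: sumr_ge0 => i _.
- split.
    rewrite /Hmat tr_block3 linearD /= sym_AtA Ssym.
    by rewrite !trmx0 !tr_scalar_mx trN1 trmxK Amat_sym.
  move=> v; have [x [y [z ->]]] := split3 v => v0.
  rewrite qf_dot H_form M_form //.
  have h1 := mdot_ge0 _ (Amat Xs *m x + mu^-1 *: z).
  have h2 := mdot_ge0 _ (y - mu^-1 *: z).
  have h3 := Sge0 x.
  have [x0|xn0] := eqVneq x 0; last first.
    by have := Spd x xn0; lra.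
  have [z0|zn0] := eqVneq z 0.
    have yn0 : y != 0.
      by apply: contraNneq v0 => y0; rewrite x0 y0 z0 !col_mx0.
    move: h1 h2 h3; rewrite x0 z0 scaler0 subr0 => h1 h2 h3.
    by have := mdot_gt0 _ y yn0; lra.
  have : 0 < mu * dot (Amat Xs *m x + mu^-1 *: z) (Amat Xs *m x + mu^-1 *: z).
    by rewrite x0 mulmx0 add0r; apply: mdot_gt0; rewrite scaler_eq0 negb_or muinv0.
  lra.
- split.
    rewrite /HKmat tr_block_mx trmxK /LambdaKt tr_block_mx tr_mxdiag !trmx0 !tr_scalar_mx.
    have E : \mxdiag_i (mu *: ((Ablk Xs i)^T *m Ablk Xs i) + Sblk Xs mu etas i)^T
         = \mxdiag_i (mu *: ((Ablk Xs i)^T *m Ablk Xs i) + Sblk Xs mu etas i).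
      by apply: eq_mxdiag => i; rewrite linearD /= sym_AtA Sisym.
    by rewrite E.
  move=> v; have [u [w [z ->]]] := split3 v => v0.
  rewrite qf_dot HK_form MK_form //.
  set T1 := \sum_i _; set T3 := \sum_i dot (submxcol u i) _.
  have h1 : 0 <= T1 by apply: sumr_ge0 => i _.
  have h2 := mdot_ge0 _ (w - mu^-1 *: z).
  have h3 : 0 <= T3 by apply: sumr_ge0 => i _.
  case: (pickP (fun i => submxcol u i != 0)) => [i ui0|allu0].
    have : 0 < T3.
      rewrite /T3 (bigD1 i) //=; apply: ltr_pwDl; first exact: Sipd.
      by apply: sumr_ge0 => j _.
    lra.
  have u0 : u = 0.
    rewrite -(submxcolK u) -(mxcol0 (p_ := pp) 1); apply: eq_mxcol => i.
    by move/negbFE/eqP: (allu0 i).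
  have [z0|zn0] := eqVneq z 0.
    have wn0 : w != 0.
      by apply: contraNneq v0 => w0; rewrite u0 w0 z0 !col_mx0.
    move: h2; rewrite z0 scaler0 subr0 => h2.
    by have := mdot_gt0 _ w wn0; lra.
  have [j _] := cV_idx zn0.
  have : 0 < T1.
    rewrite /T1 (bigD1 (tagnat.sig1 j)) //=; apply: ltr_pwDl.
      rewrite u0 submxcol0 mulmx0 add0r; apply: mdot_gt0.
      by rewrite scaler_eq0 negb_or muinv0.
    by apply: sumr_ge0 => k _.
  lra.
Qed.
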